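(* Let $\theta \in [0,1] \setminus \mathbb{Q}$ and let $m, n \in \mathbb{Z}$ with $0 < m < n$. Define $h, k \colon (S^1)^3 \to (S^1)^3$ by \[ h(\zeta_1, \zeta_2, \zeta_3) = \big(e^{2\pi i\theta}\zeta_1,\ \zeta_1^m\zeta_2,\ \zeta_2^n\zeta_3\big), \qquad k(\zeta_1, \zeta_2, \zeta_3) = \big(e^{2\pi i\theta}\zeta_1,\ \zeta_1^n\zeta_2,\ \zeta_2^m\zeta_3\big). \] Then $h$ and $k$ are not flip conjugate, that is, there is no homeomorphism $g$ of $(S^1)^3$ with $g \circ h \circ g^{-1} = k$ or $g \circ h \circ g^{-1} = k^{-1}$.
   Context: Flip conjugacy: homeomorphisms $h_1 \colon X_1 \to X_1$ and $h_2 \colon X_2 \to X_2$ are conjugate if there is a homeomorphism $g \colon X_1 \to X_2$ with $g \circ h_1 \circ g^{-1} = h_2$. They are flip conjugate if $h_1$ is conjugate to $h_2$ or to $h_2^{-1}$. *)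

(* Defs.v *)
From HB Require Import structures.
From mathcomp Require Import all_boot all_order all_algebra.
From mathcomp Require Import all_classical all_reals all_analysis.
Set Implicit Arguments. Unset Strict Implicit. Unset Printing Implicit Defensive.
Import Order.TTheory GRing.Theory Num.Theory.
Import numFieldNormedType.Exports.
Local Open Scope classical_set_scope.
Local Open Scope ring_scope.

(* Complex numbers represented as pairs (Re, Im) in R * R (product topology = usual
   topology of C = R^2). *)
Definition cmul {R : realType} (a b : R * R) : R * R :=
  (a.1 * b.1 - a.2 * b.2, a.1 * b.2 + a.2 * b.1).

Definition cpow {R : realType} (z : R * R) (n : nat) : R * R :=
  iter n (cmul z) (1, 0).

Definition cexp2pi {R : realType} (t : R) : R * R :=
  (cos (2 * pi * t), sin (2 * pi * t)).

Definition circle {R : realType} : set (R * R) :=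
  [set z | z.1 ^+ 2 + z.2 ^+ 2 = 1].

Definition torus3 {R : realType} : set ((R * R) * (R * R) * (R * R)) :=
  [set x | circle x.1.1 /\ circle x.1.2 /\ circle x.2].

Definition homeo_on {X : topologicalType} (A : set X) (g : X -> X) : Prop :=
  exists g' : X -> X,
    [/\ (forall x, A x -> A (g x)), (forall x, A x -> A (g' x)),
        (forall x, A x -> g' (g x) = x), (forall x, A x -> g (g' x) = x)
      & {within A, continuous g} /\ {within A, continuous g'}].

Definition conj_on {X : topologicalType} (A : set X) (f1 f2 : X -> X) : Prop :=
  exists g : X -> X, homeo_on A g /\ forall x, A x -> g (f1 x) = f2 (g x).

Definition inverse_on {X : Type} (A : set X) (f finv : X -> X) : Prop :=
  [/\ (forall x, A x -> A (finv x)), (forall x, A x -> finv (f x) = x)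
    & (forall x, A x -> f (finv x) = x)].

Definition flip_conj_on {X : topologicalType} (A : set X) (f1 f2 : X -> X) : Prop :=
  conj_on A f1 f2 \/ exists f2inv, inverse_on A f2 f2inv /\ conj_on A f1 f2inv.

Definition skew_map {R : realType} (theta : R) (a b : nat)
    (x : (R * R) * (R * R) * (R * R)) : (R * R) * (R * R) * (R * R) :=
  let: (z1, z2, z3) := x in
  (cmul (cexp2pi theta) z1, cmul (cpow z1 a) z2, cmul (cpow z2 b) z3).

(* Main.v *)
Require Import Defs.
From HB Require Import structures.
From mathcomp Require Import all_boot all_order all_algebra.
From mathcomp Require Import all_classical all_reals all_analysis.
From mathcomp Require Import ring lra zify.
Import Order.TTheory GRing.Theory Num.Theory.
Import numFieldNormedType.Exports.
Local Open Scope classical_set_scope.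
Local Open Scope ring_scope.
Section E2.
Context {R : realType}.
Local Notation e2 := (@cexp2pi R).

Lemma e2D (s t : R) : e2 (s + t) = cmul (e2 s) (e2 t).
Proof.
rewrite /cexp2pi /cmul /= mulrDr cosD sinD; congr (_, _).
by rewrite addrC mulrC [X in _ + X]mulrC.
Qed.

Lemma e2_add1 (t : R) : e2 (t + 1) = e2 t.
Proof.
rewrite /cexp2pi mulrDr mulr1.
have -> : 2 * pi = pi *+ 2 :> R by rewrite mulr_natl.
by rewrite cosD2pi sinD2pi.
Qed.

Lemma e2_addn (t : R) (n : nat) : e2 (t + n%:R) = e2 t.
Proof.
elim: n => [|n IH]; first by rewrite addr0.
by rewrite -natr1 addrA e2_add1.
Qed.

Lemma e2_addz (t : R) (k : int) : e2 (t + k%:~R) = e2 t.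
Proof.
case: k => n; first exact: e2_addn.
rewrite NegzE mulrNz.
by rewrite -(e2_addn (t - (n.+1)%:~R) n.+1) subrK.
Qed.

Lemma e2_0 : e2 0 = (1, 0).
Proof. by rewrite /cexp2pi mulr0 cos0 sin0. Qed.

Lemma e2_half : e2 (1/2) = (-1, 0).
Proof.
rewrite /cexp2pi; have -> : 2 * pi * (1/2) = pi :> R by field.
by rewrite cospi sinpi.
Qed.

Lemma e2_eq1 (t : R) : e2 t = (1, 0) -> t = (Num.floor t)%:~R.
Proof.
move=> H.
set s := t - (Num.floor t)%:~R.
have s0 : 0 <= s by rewrite subr_ge0 Num.Theory.floor_le.
have s1 : s < 1 by rewrite ltrBlDr addrC -[1]/(1%:~R) -intrD Num.Theory.floorD1_gt.
have Hs : e2 s = (1, 0) by rewrite -(e2_addz s (Num.floor t)) subrK.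
suff : s = 0 by move/eqP; rewrite subr_eq0 => /eqP.
move: Hs; rewrite /cexp2pi => -[Hc Hsn].
have [->|sgt0] := eqVneq s 0; first by [].
have s_pos : 0 < s by rewrite lt_neqAle eq_sym sgt0 s0.
have [x_lt|x_ge] := ltrP (2 * pi * s) pi.
  have : 0 < sin (2 * pi * s).
    apply: sin_gt0_pi; rewrite x_lt andbT.
    by rewrite mulr_gt0 // mulr_gt0 // pi_gt0.
  by rewrite Hsn ltxx.
have [x_eq|x_ne] := eqVneq (2 * pi * s) pi.
  by move: Hc; rewrite x_eq cospi => h; lra.
have x_gt : pi < 2 * pi * s by rewrite lt_neqAle eq_sym x_ne x_ge.
have : 0 < sin (2 * pi * s - pi).
  apply: sin_gt0_pi; rewrite subr_gt0 x_gt /= ltrBlDr.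
  have -> : pi + pi = 2 * pi * 1 :> R by ring.
  by rewrite ltr_pM2l // mulr_gt0 // pi_gt0.
rewrite sinB sinpi cospi Hsn.
move=> h; lra.
Qed.
End E2.
Section T.
Context {R : realType}.
Definition Lg (w : R * R) : R := atan (w.2 / (1 + w.1)) / pi.
Lemma Lg_cont (w : R * R) : 1 + w.1 != 0 -> {for w, continuous Lg}.
Proof.
move=> hw.
have h1 : {for w, continuous (fun w : R * R => w.2 / (1 + w.1))}.
  apply: cvgM; first exact: cvg_snd.
  apply: cvgV => //; apply: cvgD; first exact: cvg_cst.
  exact: cvg_fst.
rewrite /Lg; apply: cvgMl.
exact: (continuous_comp h1 (@continuous_atan R _)).
Qed.
End T.
Section T2.
Context {R : realType}.
Lemma e2_Lg (w : R * R) : circle w -> 0 < 1 + w.1 -> cexp2pi (Lg w) = w.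
Proof.
rewrite /circle /= => hc hw.
set a := w.2 / (1 + w.1).
have hc2 : cos (atan a) ^+ 2 = (1 + a ^+ 2)^-1.
  rewrite cos_atan exprVn sqr_sqrtr //.
  by rewrite addr_ge0 // sqr_ge0.
have ha : 1 + a ^+ 2 = 2 / (1 + w.1).
  rewrite /a; have hw0 : 1 + w.1 != 0 by rewrite gt_eqF.
  have e : w.2 ^+ 2 = 1 - w.1 ^+ 2 by rewrite -hc addrAC subrr add0r.
  rewrite expr_div_n e; field; exact: hw0.
have hcn : cos (atan a) != 0.
  by rewrite cos_atan invr_eq0 gt_eqF // sqrtr_gt0 ltr_wpDr // sqr_ge0.
have hs : sin (atan a) = a * cos (atan a).
  have := atanK a; rewrite /tan => {2}<-.
  by rewrite divfK.
have e2a : 2 * pi * (atan a / pi) = atan a *+ 2.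
  have pi0 : pi != 0 :> R by rewrite gt_eqF // pi_gt0.
  by rewrite -mulrA [pi * _]mulrCA mulfV // mulr1 mulrC mulr_natr.
rewrite /cexp2pi /Lg -/a e2a cos_mulr2n sin_mulr2n hc2 ha hs.
have hw0 : 1 + w.1 != 0 by rewrite gt_eqF.
rewrite [w]surjective_pairing; congr (_, _).
  by rewrite invf_div mulr2n; field.
rewrite mulrCA -expr2 hc2 ha invf_div /a mulr2n; field; exact: hw0.
Qed.
End T2.

Section Tools.
Context {R : realType}.
Local Notation e2 := (@cexp2pi R).

Definition qr (a b : R * R) : R * R := cmul a (b.1, - b.2).

Lemma cmul_qr (a b : R * R) : circle b -> cmul b (qr a b) = a.
Proof.
rewrite /circle /qr /cmul /= => hb.
rewrite [a]surjective_pairing /=; congr (_, _).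
  have -> : b.1 * (a.1 * b.1 - a.2 * - b.2) - b.2 * (a.1 * - b.2 + a.2 * b.1)
     = a.1 * (b.1 ^+ 2 + b.2 ^+ 2) by ring.
  by rewrite hb mulr1.
have -> : b.1 * (a.1 * - b.2 + a.2 * b.1) + b.2 * (a.1 * b.1 - a.2 * - b.2)
   = a.2 * (b.1 ^+ 2 + b.2 ^+ 2) by ring.
by rewrite hb mulr1.
Qed.

Lemma circle_qr (a b : R * R) : circle a -> circle b -> circle (qr a b).
Proof.
rewrite /circle /qr /cmul /= => ha hb.
have -> : (a.1 * b.1 - a.2 * - b.2) ^+ 2 + (a.1 * - b.2 + a.2 * b.1) ^+ 2
  = (a.1 ^+ 2 + a.2 ^+ 2) * (b.1 ^+ 2 + b.2 ^+ 2) by ring.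
by rewrite ha hb mulr1.
Qed.

Lemma circle_e2 (t : R) : circle (e2 t).
Proof. by rewrite /circle /cexp2pi /= cos2Dsin2. Qed.

Lemma circle_cmul (a b : R * R) : circle a -> circle b -> circle (cmul a b).
Proof.
rewrite /circle /cmul /= => ha hb.
have -> : (a.1 * b.1 - a.2 * b.2) ^+ 2 + (a.1 * b.2 + a.2 * b.1) ^+ 2
  = (a.1 ^+ 2 + a.2 ^+ 2) * (b.1 ^+ 2 + b.2 ^+ 2) by ring.
by rewrite ha hb mulr1.
Qed.

Lemma qr_e2 (s t : R) : qr (e2 s) (e2 t) = e2 (s - t).
Proof.
rewrite /qr /cexp2pi /cmul /= mulrBr cosB sinB; congr (_, _).
  by rewrite mulrN opprK.
by rewrite mulrN addrC mulrC [X in _ - X]mulrC.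
Qed.

Lemma qr_pos (a b : R * R) : circle a -> circle b -> `|a - b| < 1 -> 0 < (qr a b).1.
Proof.
rewrite /circle /qr /cmul /= prod_normE gt_max => ha hb /andP[h1 h2].
move: h1 h2; rewrite /= !ltr_norml => /andP[h1 h1'] /andP[h2 h2'].
have -> : a.1 * b.1 - a.2 * - b.2
  = ((a.1 ^+ 2 + a.2 ^+ 2) + (b.1 ^+ 2 + b.2 ^+ 2) - (a.1 - b.1) ^+ 2 - (a.2 - b.2) ^+ 2) / 2
  by field.
rewrite ha hb.
nra.
Qed.

Lemma cpow_e2 (t : R) (n : nat) : cpow (e2 t) n = e2 (n%:R * t).
Proof.
elim: n => [|n IH]; first by rewrite mul0r e2_0.
rewrite /cpow iterS -/(cpow _ _) IH -e2D; congr e2.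
by rewrite mulrSr mulrDl mul1r addrC.
Qed.

Lemma e2_lift_exists (w : R * R) : circle w -> exists t, e2 t = w.
Proof.
move=> hw.
have [h|h] := ltrP 0 (1 + w.1); first by exists (Lg w); rewrite e2_Lg.
exists (1/2); rewrite e2_half.
move: hw; rewrite /circle => hw.
have w1 : w.1 = -1.
  have : w.1 ^+ 2 <= 1 by rewrite -hw lerDl sqr_ge0.
  nra.
move: w1 hw h; case: w => a b /= -> hw _; congr (_, _).
move: hw; rewrite /= => hw; nra.
Qed.

Lemma int01 (f : R -> R) : {within `[0, 1], continuous f} ->
  (forall s, 0 <= s <= 1 -> e2 (f s) = (1, 0)) -> f 0 = 0 -> f 1 = 0.
Proof.
move=> fc fi f0.
have e1 : f 1 = (Num.floor (f 1))%:~R by apply: e2_eq1; apply: fi; rewrite lexx ler01.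
set k := Num.floor (f 1) in e1.
have [k0|kn0] := eqVneq k 0; first by rewrite e1 k0.
have [kp|kn] := ltrP 0 k.
  have k1 : 1 <= f 1 by rewrite e1 -[1]/(1%:~R) ler_int.
  have hv : Num.min (f 0) (f 1) <= 1/2 <= Num.max (f 0) (f 1).
    by rewrite f0 ge_min le_max; apply/andP; split; apply/orP; [left|right]; lra.
  have [c hc fcv] := IVT ler01 fc hv.
  move: hc; rewrite in_itv /= => hc.
  have := fi c hc; rewrite fcv e2_half => -[]; lra.
have k1 : f 1 <= -1.
  rewrite e1 -[-1]/((-1)%:~R) ler_int.
  by move: kn kn0; lia.
have hv : Num.min (f 0) (f 1) <= -(1/2) <= Num.max (f 0) (f 1).
  by rewrite f0 ge_min le_max; apply/andP; split; apply/orP; [right|left]; lra.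
have [c hc fcv] := IVT ler01 fc hv.
move: hc; rewrite in_itv /= => hc.
have := fi c hc; rewrite fcv.
have -> : -(1/2) = 1/2 + (-1)%:~R :> R by rewrite -[(-1)%:~R]/(-1); lra.
rewrite e2_addz e2_half => -[]; lra.
Qed.

Lemma const_e2 (V : normedModType R) (D : V -> R) : continuous D ->
  (forall x, e2 (D x) = (1, 0)) -> forall x, D x = D 0.
Proof.
move=> Dc Di x.
pose f := fun s : R => D (s *: x) - D 0.
have : f 1 = 0.
  apply: int01.
  - apply: continuous_subspaceT => s; apply: cvgB; last exact: cvg_cst.
    exact: (continuous_comp (@scalel_continuous _ _ x s) (Dc _)).
  - by move=> s _; rewrite /f -qr_e2 !Di /qr /cmul /=; congr (_, _); ring.
  - by rewrite /f scale0r subrr.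
by rewrite /f scale1r => /eqP; rewrite subr_eq0 => /eqP.
Qed.
End Tools.
Section HC.
Context {R : realType}.
Lemma heine (V W : normedModType R) (f : V -> W) (K : set V) :
  continuous f -> compact K -> forall e : R, 0 < e ->
  exists2 d : R, 0 < d & forall x, K x -> forall y, `|x - y| < d -> `|f x - f y| < e.
Proof.
move=> fc /compact_near_coveringP Kc e e0.
have H : \forall d \near (0:R)^'+, K `<=` (fun x => forall y, `|x - y| < d -> `|f x - f y| < e).
  apply: (Kc _ _ (fun d x => forall y, `|x - y| < d -> `|f x - f y| < e)) => x Kx.
  have e20 : 0 < e / 2 by rewrite divr_gt0.
  have fcx : f @ nbhs x --> f x := fc x. move: fcx => /cvgrPdist_lt /(_ _ e20).
  move=> /nbhs_ballP [r r0 Hr].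
  exists (ball x (r / 2), [set d : R | d < r / 2]).
    split; first by apply: nbhsx_ballx; rewrite divr_gt0.
    by apply: nbhs_right_lt; rewrite divr_gt0.
  case=> x' d [/= hx' hd] y hy.
  have hx'' : `|x - x'| < r / 2 by move: hx'; rewrite -ball_normE.
  have h1 : `|f x - f x'| < e / 2 by apply: Hr; rewrite -ball_normE /= (lt_trans hx'') // ltr_pdivrMr // ltr_pMr // ltr1n.
  have h2 : `|f x - f y| < e / 2.
    apply: Hr; rewrite -ball_normE /=.
    have := ler_distD x' x y; lra.
  have := ler_distD (f x) (f x') (f y); rewrite [`|f x' - f x|]distrC; lra.
near (0:R)^'+ => d.
have d0 : 0 < d by near: d; exact: nbhs_right_gt.
have Hd : K `<=` (fun x => forall y, `|x - y| < d -> `|f x - f y| < e) by near: d; exact: H.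
by exists d.
Unshelve. all: by end_near.
Qed.
End HC.
Section Q.
Context {R : realType}.

Lemma fst_cont {T : topologicalType} {u : T -> R * R} {x : T} :
  {for x, continuous u} -> {for x, continuous (fun y => (u y).1)}.
Proof. by move=> hu; apply: (cvg_comp _ _ hu); exact: cvg_fst. Qed.
Lemma snd_cont {T : topologicalType} {u : T -> R * R} {x : T} :
  {for x, continuous u} -> {for x, continuous (fun y => (u y).2)}.
Proof. by move=> hu; apply: (cvg_comp _ _ hu); exact: cvg_snd. Qed.
Lemma qr_cont {T : topologicalType} (u v : T -> R * R) x :
  {for x, continuous u} -> {for x, continuous v} ->
  {for x, continuous (fun y => qr (u y) (v y))}.
Proof.
move=> hu hv.
have u1 := fst_cont hu; have u2 := snd_cont hu.
have v1 := fst_cont hv; have v2 := snd_cont hv.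
rewrite /qr /cmul /=.
apply: (@cvg_pair _ _ _ (nbhs x) (nbhs _) (nbhs _) _ _ _).
  by apply: cvgB; apply: cvgM => //; apply: cvgN.
by apply: cvgD; apply: cvgM => //; apply: cvgN.
Qed.
End Q.
Section Lift.
Context {R : realType} (V : normedModType R) (W : V -> R * R).
Hypothesis Wc : continuous W.
Hypothesis Wcirc : forall x, circle (W x).
Variable d : R.
Hypothesis d0 : 0 < d.
Hypothesis Wu : forall x y, `|x - y| < d -> `|W x - W y| < 1.
Variable c0 : R.
Hypothesis hc0 : cexp2pi c0 = W 0.

Definition stp (N : nat) (x : V) (j : nat) : R :=
  Lg (qr (W ((j.+1)%:R / N%:R *: x)) (W (j%:R / N%:R *: x))).

Fixpoint Ssum (N : nat) (x : V) (k : nat) : R :=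
  if k is k'.+1 then Ssum N x k' + stp N x k' else c0.

Lemma good N x j : (0 < N)%N -> `|x| < N%:R * d ->
  `|W ((j.+1)%:R / N%:R *: x) - W (j%:R / N%:R *: x)| < 1.
Proof.
move=> N0 hx; apply: Wu.
rewrite -scalerBl -mulrBl -natrB // subSnn normrZ.
have Np : 0 < N%:R :> R by rewrite ltr0n.
rewrite mul1r normfV ger0_norm ?ler0n // mulrC ltr_pdivrMr //.
by rewrite mulrC.
Qed.

Lemma qr_pos_good N x j : (0 < N)%N -> `|x| < N%:R * d ->
  0 < (qr (W ((j.+1)%:R / N%:R *: x)) (W (j%:R / N%:R *: x))).1.
Proof. by move=> N0 hx; apply: qr_pos => //; apply: good. Qed.

Lemma Ssum_e2 N x k : (0 < N)%N -> `|x| < N%:R * d ->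
  cexp2pi (Ssum N x k) = W (k%:R / N%:R *: x).
Proof.
move=> N0 hx; elim: k => [|k IH] /=.
  by rewrite mul0r scale0r hc0.
rewrite e2D IH /stp e2_Lg.
- by rewrite cmul_qr.
- by apply: circle_qr.
- by rewrite ltr_wpDl // qr_pos_good.
Qed.

Lemma stp_cont N x j : (0 < N)%N -> `|x| < N%:R * d ->
  {for x, continuous (fun y => stp N y j)}.
Proof.
move=> N0 hx.
have h1 : {for x, continuous (fun y => qr (W ((j.+1)%:R / N%:R *: y)) (W (j%:R / N%:R *: y)))}.
  apply: qr_cont.
    exact: (continuous_comp (@scaler_continuous _ _ _ x) (Wc _)).
  exact: (continuous_comp (@scaler_continuous _ _ _ x) (Wc _)).
apply: (continuous_comp h1); apply: Lg_cont.
by rewrite gt_eqF // ltr_wpDl // qr_pos_good.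
Qed.

Lemma Ssum_cont N x k : (0 < N)%N -> `|x| < N%:R * d ->
  {for x, continuous (fun y => Ssum N y k)}.
Proof.
move=> N0 hx; elim: k => [|k IH] /=; first exact: cvg_cst.
by apply: cvgD => //; apply: stp_cont.
Qed.

Lemma Ssum0 N k : Ssum N 0 k = c0.
Proof.
elim: k => [|k IH] //=.
rewrite IH /stp !scaler0 /Lg /qr /cmul /=.
have := Wcirc 0; rewrite /circle /= => h.
have -> : (W 0).1 * - (W 0).2 + (W 0).2 * (W 0).1 = 0 by ring.
by rewrite mul0r atan0 mul0r addr0.
Qed.

Lemma Ssum_indep N1 N2 x : (0 < N1)%N -> (0 < N2)%N ->
  `|x| < N1%:R * d -> `|x| < N2%:R * d -> Ssum N1 x N1 = Ssum N2 x N2.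
Proof.
move=> N10 N20 h1 h2.
pose f := fun s : R => Ssum N1 (s *: x) N1 - Ssum N2 (s *: x) N2.
have hs : forall s : R, 0 <= s <= 1 -> forall N, `|x| < N%:R * d -> `|s *: x| < N%:R * d.
  move=> s /andP[s0 s1] N hN; rewrite normrZ ger0_norm //.
  apply: le_lt_trans hN; rewrite -[X in _ <= X]mul1r.
  by apply: ler_wpM2r.
have : f 1 = 0.
  apply: int01.
  - apply: continuous_in_subspaceT => s; rewrite inE /= in_itv /= => hs01.
    have c1 := continuous_comp (@scalel_continuous R V x s) (@Ssum_cont N1 (s *: x) N1 N10 (hs s hs01 _ h1)).
    have c2 := continuous_comp (@scalel_continuous R V x s) (@Ssum_cont N2 (s *: x) N2 N20 (hs s hs01 _ h2)).
    exact: cvgB c1 c2.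
  - move=> s hs01; rewrite /f -qr_e2 !Ssum_e2 ?hs //.
    rewrite !divff ?pnatr_eq0 -?lt0n // !scale1r.
    have := Wcirc (s *: x); rewrite /circle /qr /cmul /= => hc.
    by congr (_, _); [rewrite -hc | ]; ring.
  - by rewrite /f !scale0r !Ssum0 subrr.
by rewrite /f !scale1r => /eqP; rewrite subr_eq0 => /eqP.
Qed.

Definition Nx (x : V) : nat := (Num.trunc (`|x| / d)).+1.

Lemma Nx_spec x : `|x| < (Nx x)%:R * d.
Proof. by rewrite -ltr_pdivrMr // truncnS_gt. Qed.

Definition Phi (x : V) : R := Ssum (Nx x) x (Nx x).

Lemma Phi_e2 x : cexp2pi (Phi x) = W x.
Proof.
by rewrite /Phi Ssum_e2 // ?Nx_spec // divff ?pnatr_eq0 // scale1r.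
Qed.

Lemma Phi_cont : continuous Phi.
Proof.
move=> x0.
set N0 := Nx x0.
have hnear : \forall y \near x0, `|y| < N0%:R * d.
  exact: (cvgr_lt _ (@norm_continuous _ _ x0) _ (Nx_spec x0)).
have heq : {near x0, (fun y => Ssum N0 y N0) =1 Phi}.
  near=> y; rewrite /Phi; apply: Ssum_indep => //.
    by near: y.
  exact: Nx_spec.
have : (fun y => Ssum N0 y N0) @ x0 --> Phi x0 by exact: Ssum_cont (Nx_spec x0).
by move/(cvg_trans (near_eq_cvg heq)).
Unshelve. all: by end_near.
Qed.

End Lift.

Lemma lift_exists {R : realType} (V : normedModType R) (W : V -> R * R) :
  continuous W -> (forall x, circle (W x)) ->
  (exists2 d : R, 0 < d & forall x y, `|x - y| < d -> `|W x - W y| < 1) ->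
  exists Phi : V -> R, continuous Phi /\ forall x, cexp2pi (Phi x) = W x.
Proof.
move=> Wc Wcirc [d d0 Wu].
have [c0 hc0] := e2_lift_exists (W 0) (Wcirc 0).
exists (@Phi R V W d c0); split.
  exact: Phi_cont.
by move=> x; apply: Phi_e2.
Qed.
Definition int3 := (int * int * int)%type.
Definition vadd (u w : int3) : int3 := (u.1.1 + w.1.1, u.1.2 + w.1.2, u.2 + w.2).
Definition vsc (c : int) (u : int3) : int3 := (c * u.1.1, c * u.1.2, c * u.2).
Definition Mlin (a b : int) (v : int3) : int3 := (v.1.1, v.1.2 + a * v.1.1, v.2 + b * v.1.2).

Lemma vsc_add (f : int3 -> int3) : (forall u w, f (vadd u w) = vadd (f u) (f w)) ->
  forall c u, f (vsc c u) = vsc c (f u).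
Proof.
move=> fa.
have f0 : f (0, 0, 0) = (0, 0, 0).
  have := fa (0,0,0) (0,0,0); rewrite /vadd /= !addr0.
  by case: (f (0,0,0)) => [[a b] e] /= [h1 h2 h3]; congr (_, _, _); lia.
have fn : forall (k : nat) u, f (vsc k%:Z u) = vsc k%:Z (f u).
  move=> k u; elim: k => [|k IH].
    by rewrite /vsc !mul0r f0.
  have -> : vsc (k.+1)%:Z u = vadd (vsc k%:Z u) u.
    by rewrite /vsc /vadd /= -[k.+1]addn1 PoszD !mulrDl !mul1r.
  rewrite fa IH /vsc /vadd /= -[k.+1]addn1 PoszD !mulrDl !mul1r.
  by [].
have fN : forall u, f (vsc (-1) u) = vsc (-1) (f u).
  move=> u; have := fa u (vsc (-1) u).
  have -> : vadd u (vsc (-1) u) = (0,0,0) by rewrite /vadd /vsc /= !mulN1r !subrr.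
  rewrite f0 /vadd /vsc /=; case: (f u) => [[a b] e]; case: (f (vsc (-1) u)) => [[a' b'] e'] /=.
  by case=> h1 h2 h3; congr (_, _, _); lia.
move=> c u; case: c => k; first exact: fn.
have -> : vsc (Negz k) u = vsc (-1) (vsc (k.+1)%:Z u).
  by rewrite /vsc /= !mulrA !mulN1r NegzE.
rewrite fN fn /vsc /= !mulrA !mulN1r NegzE //.
Qed.

Lemma alg_main (m n : nat) (X Y : int3 -> int3) :
  (0 < m)%N -> (m < n)%N ->
  (forall u w, X (vadd u w) = vadd (X u) (X w)) ->
  (forall u w, Y (vadd u w) = vadd (Y u) (Y w)) ->
  (forall v, X (Y v) = v) -> (forall v, Y (X v) = v) ->
  (forall v, X (Mlin m n v) = Mlin n m (X v)) \/ (forall v, Mlin n m (X (Mlin m n v)) = X v) ->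
  False.
Proof.
move=> m0 mn Xa Ya XY YX H.
have m0' : (m%:Z != 0) by rewrite eqz_nat -lt0n.
have n0' : (n%:Z != 0) by rewrite eqz_nat -lt0n (leq_trans _ mn).
have HY : (forall w, Y (Mlin n m w) = Mlin m n (Y w)) \/ (forall w, Mlin m n (Y (Mlin n m w)) = Y w).
  case: H => H; [left|right] => w.
    by rewrite -{1}(XY w) -H YX.
  have inj : forall a b, Mlin n m a = Mlin n m b -> a = b.
    case=> [[a1 a2] a3] [[b1 b2] b3]; rewrite /Mlin /= => -[h1 h2 h3].
    move: h2 h3; rewrite h1 => /addIr h2; rewrite h2 => /addIr h3.
    by rewrite h3.
  set z := Y (Mlin n m w).
  have : Mlin n m (X (Mlin m n z)) = Mlin n m w by rewrite H /z XY.
  by move/inj => <-; rewrite YX.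
have e3f : Mlin n m (0, 0, 1) = (0, 0, 1) by rewrite /Mlin /= !mulr0 !addr0.
have e2f : Mlin n m (0, 1, 0) = vadd (0, 1, 0) (vsc m (0, 0, 1)).
  by rewrite /Mlin /vadd /vsc /= !mulr0 !addr0 !add0r mulr1.
have [c Yc] : exists c, Y (0, 0, 1) = (0, 0, c).
  have : Mlin m n (Y (0, 0, 1)) = Y (0, 0, 1).
    by case: HY => HY; [rewrite -HY e3f | rewrite -{2}(HY (0,0,1)) e3f].
  case: (Y (0,0,1)) => [[u1 u2] u3]; rewrite /Mlin /= => -[h2 h3].
  have : m%:Z * u1 = 0 by lia.
  move/eqP; rewrite mulf_eq0 (negbTE m0') /= => /eqP u10.
  have : n%:Z * u2 = 0 by lia.
  move/eqP; rewrite mulf_eq0 (negbTE n0') /= => /eqP u20.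
  by exists u3; rewrite u10 u20.
have Ysc : forall k, Y (vsc k (0, 0, 1)) = (0, 0, k * c).
  by move=> k; rewrite vsc_add // Yc /vsc /= !mulr0.
have [w2 hw] : exists w2, m%:Z * c = n%:Z * w2.
  case: HY => HY.
    have := HY (0, 1, 0); rewrite e2f Ya Ysc.
    case: (Y (0,1,0)) => [[w1 w2'] w3]; rewrite /vadd /Mlin /= => -[h1 h2].
    exists w2'.
    have : m%:Z * w1 = 0 by lia.
    move/eqP; rewrite mulf_eq0 (negbTE m0') /= => /eqP w10.
    move: h2; rewrite w10; lia.
  have := HY (0, 1, 0); rewrite e2f Ya Ysc.
  case: (Y (0,1,0)) => [[w1 w2'] w3]; rewrite /vadd /Mlin /= => -[h1 h2].
  exists (- w2').
  have : m%:Z * w1 = 0 by lia.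
  move/eqP; rewrite mulf_eq0 (negbTE m0') /= => /eqP w10.
  move: h2; rewrite w10; lia.
have [x hx] : exists x, c * x = 1.
  have := XY (0, 0, 1); rewrite Yc.
  have -> : ((0, 0, c) : int3) = vsc c (0, 0, 1) by rewrite /vsc /= !mulr0 mulr1.
  rewrite (@vsc_add X Xa) /vsc /=.
  by case: (X (0,0,1)) => [[a b] e] /= [] _ _ h; exists e.
have : m%:Z = n%:Z * (w2 * x) by rewrite mulrA -hw -mulrA hx mulr1.
move: m0 mn; clear; move=> m0 mn h.
have hm : (0 < m%:Z) by rewrite ltz_nat.
have hmn : (m%:Z < n%:Z) by rewrite ltz_nat.
set q := w2 * x in h.
have [q0|q1] := lerP q 0; nia.
Qed.
Lemma gfst_cont {T U V : topologicalType} {u : T -> U * V} {x : T} :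
  {for x, continuous u} -> {for x, continuous (fun y => (u y).1)}.
Proof. by move=> hu; apply: (cvg_comp _ _ hu); exact: cvg_fst. Qed.
Lemma gsnd_cont {T U V : topologicalType} {u : T -> U * V} {x : T} :
  {for x, continuous u} -> {for x, continuous (fun y => (u y).2)}.
Proof. by move=> hu; apply: (cvg_comp _ _ hu); exact: cvg_snd. Qed.

Section Torus.
Context {R : realType}.
Local Notation X := ((R * R) * (R * R) * (R * R))%type.
Local Notation R3 := (R * R * R)%type.

Definition Emap (t : R3) : X := (cexp2pi t.1.1, cexp2pi t.1.2, cexp2pi t.2).
Definition iv (v : int3) : R3 := (v.1.1%:~R, v.1.2%:~R, v.2%:~R).

Lemma e2_cont : continuous (@cexp2pi R).
Proof.
move=> t; rewrite /cexp2pi.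
apply: (@cvg_pair _ _ _ (nbhs t) (nbhs _) (nbhs _) _ _ _).
  apply: (continuous_comp _ (@continuous_cos R _)).
  by apply: cvgMr; exact: cvg_id.
apply: (continuous_comp _ (@continuous_sin R _)).
by apply: cvgMr; exact: cvg_id.
Qed.

Lemma Emap_cont : continuous Emap.
Proof.
move=> t; rewrite /Emap.
have h1 : {for t, continuous (fun y : R3 => y.1.1)}.
  by apply: gfst_cont; apply: gfst_cont; exact: cvg_id.
have h2 : {for t, continuous (fun y : R3 => y.1.2)}.
  by apply: gsnd_cont; apply: gfst_cont; exact: cvg_id.
have h3 : {for t, continuous (fun y : R3 => y.2)}.
  by apply: gsnd_cont; exact: cvg_id.
apply: (@cvg_pair _ _ _ (nbhs t) (nbhs _) (nbhs _) _ _ _).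
  apply: (@cvg_pair _ _ _ (nbhs t) (nbhs _) (nbhs _) _ _ _).
    exact: (continuous_comp h1 (e2_cont _)).
  exact: (continuous_comp h2 (e2_cont _)).
exact: (continuous_comp h3 (e2_cont _)).
Qed.

Lemma Emap_A t : torus3 (Emap t).
Proof. by rewrite /torus3 /Emap /=; split; [|split]; apply: circle_e2. Qed.

Lemma Emap_per t v : Emap (t + iv v) = Emap t.
Proof. by rewrite /Emap /iv /= !e2_addz. Qed.

Definition fl (x : R3) : int3 := (Num.floor x.1.1, Num.floor x.1.2, Num.floor x.2).

Lemma cube_compact : compact ((`[0, 1] `*` `[0, 1]) `*` `[0, 1] : set R3).
Proof. by apply: compact_setX; [apply: compact_setX|]; apply: segment_compact. Qed.

Lemma frac01 (r : R) : r - (Num.floor r)%:~R \in `[0, 1].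
Proof.
rewrite in_itv /= subr_ge0 Num.Theory.floor_le /= lerBlDr addrC.
by apply: ltW; rewrite -[1]/(1%:~R) -intrD Num.Theory.floorD1_gt.
Qed.

Lemma unif_per (W : R3 -> R * R) : continuous W -> (forall t v, W (t + iv v) = W t) ->
  exists2 d : R, 0 < d & forall x y, `|x - y| < d -> `|W x - W y| < 1.
Proof.
move=> Wc Wp.
have [d d0 Hd] := @heine R _ _ W _ Wc cube_compact 1 ltr01.
exists d => // x y hxy.
set a := iv (fl x).
have Kx : ((`[0, 1] `*` `[0, 1]) `*` `[0, 1] : set R3) (x - a).
  by split; [split|]; rewrite /= ?inE; apply: frac01.
have := Hd (x - a) Kx (y - a).
rewrite opprB addrA subrK => /(_ hxy).
by rewrite -(Wp (x - a) (fl x)) -(Wp (y - a) (fl x)) !subrK.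
Qed.

End Torus.

Lemma comp_within {T U V : topologicalType} (E : T -> U) (A : set U) (g : U -> V) :
  continuous E -> (forall t, A (E t)) -> {within A, continuous g} -> continuous (g \o E).
Proof.
move=> Ec EA /subspace_continuousP gc t.
have hE : E @ t --> within A (nbhs (E t)).
  move=> P hP.
  have h1 : nbhs t (E @^-1` (fun y => A y -> P y)) := Ec t _ hP.
  have h2 : nbhs t (E @^-1` P) by apply: filterS h1 => y h; exact: h (EA y).
  exact: h2.
exact: (cvg_comp _ _ hE (gc _ (EA t))).
Qed.


Section Lifts.
Context {R : realType}.
Local Notation X := ((R * R) * (R * R) * (R * R))%type.
Local Notation R3 := (R * R * R)%type.

Lemma qr_self (w : R * R) : circle w -> qr w w = (1, 0).
Proof.
rewrite /circle /qr /cmul /= => h; congr (_, _); last by ring.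
by rewrite -h; ring.
Qed.

Lemma transl_cont (a : R3) : continuous (fun x : R3 => x + a).
Proof. by move=> x; apply: cvgD; [exact: cvg_id | exact: cvg_cst]. Qed.

Lemma lift_coord (W : R3 -> R * R) : continuous W -> (forall t, circle (W t)) ->
  (forall t v, W (t + iv v) = W t) ->
  exists Phi : R3 -> R, exists M : int3 -> int,
    [/\ continuous Phi, (forall x, cexp2pi (Phi x) = W x) &
        (forall x v, Phi (x + iv v) = Phi x + (M v)%:~R)].
Proof.
move=> Wc Wcirc Wp.
have [Phi [Phic Phie]] := @lift_exists R _ W Wc Wcirc (unif_per W Wc Wp).
exists Phi, (fun v => Num.floor (Phi (iv v) - Phi 0)); split => // x v.
pose D := fun y : R3 => Phi (y + iv v) - Phi y.
have Dc : continuous D.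
  move=> y; apply: cvgB; last exact: Phic.
  exact: (continuous_comp (transl_cont (iv v) y) (Phic _)).
have De : forall y, cexp2pi (D y) = (1, 0).
  by move=> y; rewrite /D -qr_e2 !Phie Wp qr_self.
have h := @const_e2 R _ D Dc De x.
have h0 := @e2_eq1 R (D 0) (De 0).
rewrite /D add0r in h h0.
by rewrite -h0 -h addrCA subrr addr0.
Qed.

Definition islift (g : X -> X) (Psi : R3 -> R3) (M : int3 -> int3) :=
  [/\ continuous Psi, (forall x, Emap (Psi x) = g (Emap x)) &
      (forall x v, Psi (x + iv v) = Psi x + iv (M v))].

Lemma lift_map (g : X -> X) : (forall p, torus3 p -> torus3 (g p)) ->
  {within torus3, continuous g} -> exists Psi M, islift g Psi M.
Proof.
move=> gA gc.
have Gc := @comp_within _ _ _ Emap torus3 g (@Emap_cont R) (@Emap_A R) gc.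
have GA : forall t, torus3 (g (Emap t)) by move=> t; apply: gA; apply: Emap_A.
have [P1 [M1 [c1 e1 p1]]] : exists Phi : R3 -> R, exists M : int3 -> int,
    [/\ continuous Phi, (forall x, cexp2pi (Phi x) = (g (Emap x)).1.1) &
        (forall x v, Phi (x + iv v) = Phi x + (M v)%:~R)].
  apply: lift_coord.
  - move=> t; exact: (@gfst_cont _ _ _ (fun y => (g (Emap y)).1) t (@gfst_cont _ _ _ (g \o Emap) t (Gc t))).
  - by move=> t; case: (GA t).
  - by move=> t v; rewrite Emap_per.
have [P2 [M2 [c2 e2 p2]]] : exists Phi : R3 -> R, exists M : int3 -> int,
    [/\ continuous Phi, (forall x, cexp2pi (Phi x) = (g (Emap x)).1.2) &
        (forall x v, Phi (x + iv v) = Phi x + (M v)%:~R)].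
  apply: lift_coord.
  - move=> t; exact: (@gsnd_cont _ _ _ (fun y => (g (Emap y)).1) t (@gfst_cont _ _ _ (g \o Emap) t (Gc t))).
  - by move=> t; case: (GA t) => _ [].
  - by move=> t v; rewrite Emap_per.
have [P3 [M3 [c3 e3 p3]]] : exists Phi : R3 -> R, exists M : int3 -> int,
    [/\ continuous Phi, (forall x, cexp2pi (Phi x) = (g (Emap x)).2) &
        (forall x v, Phi (x + iv v) = Phi x + (M v)%:~R)].
  apply: lift_coord.
  - move=> t; exact: (@gsnd_cont _ _ _ (g \o Emap) t (Gc t)).
  - by move=> t; case: (GA t) => _ [].
  - by move=> t v; rewrite Emap_per.
exists (fun x => (P1 x, P2 x, P3 x)), (fun v => (M1 v, M2 v, M3 v)); split.
- move=> x.
  apply: (@cvg_pair _ _ _ (nbhs x) (nbhs _) (nbhs _) _ _ _).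
    by apply: (@cvg_pair _ _ _ (nbhs x) (nbhs _) (nbhs _) _ _ _); [exact: c1|exact: c2].
  exact: c3.
- by move=> x; rewrite /Emap /= e1 e2 e3; case: (g (Emap x)) => [[a b] c].
- by move=> x v; rewrite p1 p2 p3.
Qed.
End Lifts.
Section L2.
Context {R : realType}.
Local Notation X := ((R * R) * (R * R) * (R * R))%type.
Local Notation R3 := (R * R * R)%type.

Lemma iv_add (u w : int3) : @iv R (vadd u w) = iv u + iv w.
Proof. by rewrite /iv /vadd /= !intrD. Qed.

Lemma iv_inj (u w : int3) : @iv R u = iv w -> u = w.
Proof.
case: u => [[u1 u2] u3]; case: w => [[w1 w2] w3]; rewrite /iv /= => -[h1 h2 h3].
by rewrite (intr_inj h1) (intr_inj h2) (intr_inj h3).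
Qed.

Lemma lift_add g Psi M : @islift R g Psi M -> forall u w, M (vadd u w) = vadd (M u) (M w).
Proof.
case=> _ _ hp u w; apply: iv_inj.
have := hp 0 (vadd u w).
rewrite iv_add addrA hp hp => h.
by rewrite iv_add; apply: (@addrI _ (Psi 0)); rewrite -h addrA.
Qed.

Lemma coord_uniq (f1 f2 : R3 -> R) (v : int3) (c1 c2 : int) :
  continuous f1 -> continuous f2 -> (forall x, cexp2pi (f1 x) = cexp2pi (f2 x)) ->
  f1 (iv v) = f1 0 + c1%:~R -> f2 (iv v) = f2 0 + c2%:~R -> c1 = c2.
Proof.
move=> c1c c2c he h1 h2.
pose D := fun x => f1 x - f2 x.
have Dc : continuous D by move=> x; apply: cvgB; [exact: c1c|exact: c2c].
have De : forall x, cexp2pi (D x) = (1, 0).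
  by move=> x; rewrite /D -qr_e2 he qr_self //; apply: circle_e2.
have := @const_e2 R _ D Dc De (iv v).
rewrite /D h1 h2 => h.
apply: (@intr_inj R).
have : c1%:~R - c2%:~R = 0 :> R by move: h; lra.
by move/eqP; rewrite subr_eq0 => /eqP.
Qed.

Lemma lift_uniq g Psi1 M1 Psi2 M2 : @islift R g Psi1 M1 -> islift g Psi2 M2 -> forall v, M1 v = M2 v.
Proof.
case=> c1 e1 p1 [c2 e2 p2] v.
have hv1 := p1 0 v; have hv2 := p2 0 v; rewrite add0r in hv1 hv2.
have E : forall x, Emap (Psi1 x) = Emap (Psi2 x) by move=> x; rewrite e1 e2.
have C1 := fun x => @gfst_cont _ _ _ _ x (@gfst_cont _ _ _ _ x (c1 x)).
have C2 := fun x => @gsnd_cont _ _ _ _ x (@gfst_cont _ _ _ _ x (c1 x)).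
have C3 := fun x => @gsnd_cont _ _ _ _ x (c1 x).
have D1 := fun x => @gfst_cont _ _ _ _ x (@gfst_cont _ _ _ _ x (c2 x)).
have D2 := fun x => @gsnd_cont _ _ _ _ x (@gfst_cont _ _ _ _ x (c2 x)).
have D3 := fun x => @gsnd_cont _ _ _ _ x (c2 x).
have u1 : (M1 v).1.1 = (M2 v).1.1.
  apply: (@coord_uniq (fun x => (Psi1 x).1.1) (fun x => (Psi2 x).1.1) v _ _ C1 D1) => //.
  - by move=> x; have := congr1 (fun p => p.1.1) (E x).
  - by rewrite hv1.
  - by rewrite hv2.
have u2 : (M1 v).1.2 = (M2 v).1.2.
  apply: (@coord_uniq (fun x => (Psi1 x).1.2) (fun x => (Psi2 x).1.2) v _ _ C2 D2) => //.
  - by move=> x; have := congr1 (fun p => p.1.2) (E x).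
  - by rewrite hv1.
  - by rewrite hv2.
have u3 : (M1 v).2 = (M2 v).2.
  apply: (@coord_uniq (fun x => (Psi1 x).2) (fun x => (Psi2 x).2) v _ _ C3 D3) => //.
  - by move=> x; have := congr1 (fun p => p.2) (E x).
  - by rewrite hv1.
  - by rewrite hv2.
by move: u1 u2 u3; case: (M1 v) => [[a b] c]; case: (M2 v) => [[a' b'] c'] /= -> -> ->.
Qed.

Lemma lift_comp g f Psi M Phi N : @islift R g Psi M -> islift f Phi N ->
  islift (g \o f) (Psi \o Phi) (M \o N).
Proof.
case=> c1 e1 p1 [c2 e2 p2]; split.
- by move=> x; apply: continuous_comp; [exact: c2|exact: c1].
- by move=> x /=; rewrite e1 e2.
- by move=> x v /=; rewrite p2 p1.
Qed.

Lemma lift_ext g g' Psi M : @islift R g Psi M -> (forall p, torus3 p -> g p = g' p) ->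
  islift g' Psi M.
Proof.
case=> c1 e1 p1 h; split => // x.
by rewrite e1 h //; apply: Emap_A.
Qed.

Lemma lift_id : @islift R id id id.
Proof. by split => // x; exact: cvg_id. Qed.
End L2.
Section Main.
Context {R : realType}.
Local Notation X := ((R * R) * (R * R) * (R * R))%type.
Local Notation R3 := (R * R * R)%type.

Definition Hlift (theta : R) (a b : nat) (t : R3) : R3 :=
  (t.1.1 + theta, t.1.2 + a%:R * t.1.1, t.2 + b%:R * t.1.2).

Lemma Hlift_lift (theta : R) (a b : nat) :
  islift (skew_map theta a b) (Hlift theta a b) (Mlin a b).
Proof.
split.
- move=> t.
  have h1 : {for t, continuous (fun y : R3 => y.1.1)}.
    by apply: gfst_cont; apply: gfst_cont; exact: cvg_id.
  have h2 : {for t, continuous (fun y : R3 => y.1.2)}.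
    by apply: gsnd_cont; apply: gfst_cont; exact: cvg_id.
  have h3 : {for t, continuous (fun y : R3 => y.2)}.
    by apply: gsnd_cont; exact: cvg_id.
  rewrite /Hlift.
  apply: (@cvg_pair _ _ _ (nbhs t) (nbhs _) (nbhs _) _ _ _).
    apply: (@cvg_pair _ _ _ (nbhs t) (nbhs _) (nbhs _) _ _ _).
      by apply: cvgD => //; exact: cvg_cst.
    by apply: cvgD => //; apply: cvgM => //; exact: cvg_cst.
  by apply: cvgD => //; apply: cvgM => //; exact: cvg_cst.
- move=> t; rewrite /Hlift /Emap /skew_map /=.
  by rewrite !cpow_e2 -!e2D addrC [_ * _ + _]addrC [b%:R * _ + _]addrC.
- move=> t v; rewrite /Hlift /iv /Mlin /=.
  congr (_, _, _).
  + by rewrite addrAC.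
  + by rewrite intrD intrM /= mulrDr; ring.
  + by rewrite intrD intrM /= mulrDr; ring.
Qed.
End Main.

Theorem mainTheorem3 (R : realType) (theta : R) (m n : nat)
  (htheta : 0 <= theta <= 1) (hirr : forall q : rat, theta != ratr q)
  (hm : (0 < m)%N) (hmn : (m < n)%N) :
  ~ flip_conj_on torus3 (skew_map theta m n) (skew_map theta n m).
Proof.
have hh := @Hlift_lift R theta m n.
have hk := @Hlift_lift R theta n m.
move=> H.
have [g [[g' [gA g'A g'g gg' [gc g'c]]] hgen]] :
  exists g : (R * R) * (R * R) * (R * R) -> (R * R) * (R * R) * (R * R),
    homeo_on torus3 g /\
    ((forall p, torus3 p -> g (skew_map theta m n p) = skew_map theta n m (g p)) \/
     (forall p, torus3 p -> skew_map theta n m (g (skew_map theta m n p)) = g p)).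
  case: H => [[g [hg hc]]|[kinv [[kA kik kki] [g [hg hc]]]]].
    by exists g; split => //; left.
  exists g; split => //; right => p Ap.
  rewrite hc // kki //.
  by case: hg => g' [gA _ _ _ _]; apply: gA.
have [Pg [Xm hg]] := @lift_map R g gA gc.
have [Pg' [Ym hg']] := @lift_map R g' g'A g'c.
have XY : forall v, Xm (Ym v) = v.
  move=> v.
  have h1 := @lift_comp R _ _ _ _ _ _ hg hg'.
  have h2 : islift id (Pg \o Pg') (Xm \o Ym) by apply: (@lift_ext R _ _ _ _ h1) => p Ap /=; rewrite gg'.
  exact: (@lift_uniq R _ _ _ _ _ h2 lift_id v).
have YX : forall v, Ym (Xm v) = v.
  move=> v.
  have h1 := @lift_comp R _ _ _ _ _ _ hg' hg.
  have h2 : islift id (Pg' \o Pg) (Ym \o Xm) by apply: (@lift_ext R _ _ _ _ h1) => p Ap /=; rewrite g'g.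
  exact: (@lift_uniq R _ _ _ _ _ h2 lift_id v).
apply: (@alg_main m n Xm Ym hm hmn (@lift_add R _ _ _ hg) (@lift_add R _ _ _ hg') XY YX).
case: hgen => hc; [left|right] => v.
  have h1 := @lift_comp R _ _ _ _ _ _ hg hh.
  have h2 := @lift_comp R _ _ _ _ _ _ hk hg.
  have h3 : islift (skew_map theta n m \o g) (Pg \o Hlift theta m n) (Xm \o Mlin m n).
    by apply: (@lift_ext R _ _ _ _ h1) => p Ap /=; rewrite hc.
  exact: (@lift_uniq R _ _ _ _ _ h3 h2 v).
have h1 := @lift_comp R _ _ _ _ _ _ hk (@lift_comp R _ _ _ _ _ _ hg hh).
have h3 : islift g (Hlift theta n m \o (Pg \o Hlift theta m n)) (Mlin n m \o (Xm \o Mlin m n)).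
  by apply: (@lift_ext R _ _ _ _ h1) => p Ap /=; rewrite hc.
exact: (@lift_uniq R _ _ _ _ _ h3 hg v).
Qed.
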